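(* For the RHA process and all $n\ge0$, $j\ge1$, $$H(X^n_j)\le\min_{0\le l\le n}\Big(H(\mathcal G_{\le l})+2^{n-l}\log k_l\Big),$$ where $H(\mathcal G_{\le0})=0$.
   Context: Random hierarchical association (RHA) process. Fix positive integers $(k_n)_{n\ge0}$ (perplexities) with $k_{n-1}\le k_n\le k_{n-1}^2$ for all $n\ge1$. On a probability space $(\Omega,\mathcal J,P)$ let, for each $n\ge1$, $(L_{nj},R_{nj})_{j=1}^{k_n}$ be the lexicographically sorted enumeration of a uniformly random $k_n$-element subset of $\{1,\dots,k_{n-1}\}^2$ (each of the $\binom{k_{n-1}^2}{k_n}$ subsets equally likely), independently over $n$. Let $(C_n)_{n\ge0}$ be independent, independent of all $(L_{nj},R_{nj})$, with $C_n$ uniform on $\{1,\dots,k_n\}$. Define strings $Y^0_j=j$ (length 1) for $1\le j\le k_0$ and $Y^n_j=Y^{n-1}_{L_{nj}}Y^{n-1}_{R_{nj}}$ (concatenation). The RHA process is $\mathcal X=Y^0_{C_0}Y^1_{C_1}Y^2_{C_2}\cdots=X_1X_2X_3\cdots$, $X_{k:l}=X_k\cdots X_l$; for $n\ge0$, $j\ge1$, $X^n_j=X_{j2^n:(j+1)2^n-1}$. $\mathcal G_{\le n}=(L_{lj},R_{lj})_{1\le l\le n,\,1\le j\le k_l}$ ($\mathcal G_{\le0}$ trivial). $H(X)=\mathbb E_P[-\log P(X)]$ with natural logarithm. *)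

(* Defs.v *)
From HB Require Import structures.
From mathcomp Require Import all_boot.
From Stdlib Require Import Reals.

Set Implicit Arguments.
Unset Strict Implicit.
Unset Printing Implicit Defensive.

(* Conventions:
   - all indices are 0-based internally: the symbol/index i in 'I_(k l)
     stands for i+1 in {1,...,k_l};
   - the probability space is the finite product of the first M levels:
     graph levels 1..M and choices C_0..C_M, with the uniform (= product of
     uniforms) measure; M is any level large enough for the block considered. *)

(* the random k_{l+1}-subset of {1..k_l}^2 chosen at level l+1 *)
Definition Gset (k : nat -> nat) (l : nat) : finType :=
  {A : {set ('I_(k l) * 'I_(k l))} | #|A| == k l.+1}.

Definition Omega (k : nat -> nat) (M : nat) : finType :=
  ({dffun forall l : 'I_M, Gset k l} * {dffun forall l : 'I_M.+1, 'I_(k l)})%type.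

Definition lexle (p q : nat * nat) : bool :=
  (p.1 < q.1) || ((p.1 == q.1) && (p.2 <= q.2)).

(* (L_{l+1,j}, R_{l+1,j})_j : lexicographically sorted enumeration of the
   subset chosen at level l+1 (0-based entries) *)
Definition edges k M (w : Omega k M) (l : nat) : seq (nat * nat) :=
  match (insub l : option 'I_M) with
  | Some i => sort lexle [seq ((val p.1 : nat), (val p.2 : nat)) | p <- enum (val (w.1 i))]
  | None => [::]
  end.

(* Y^n_{j+1} (strings over {1..k_0}) *)
Fixpoint Y k M (w : Omega k M) (n j : nat) : seq nat :=
  match n with
  | 0 => [:: j.+1]
  | n'.+1 => let e := nth (0, 0) (edges w n') j in Y w n' e.1 ++ Y w n' e.2
  end.

Definition Cv k M (w : Omega k M) (l : nat) : nat :=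
  match (insub l : option 'I_M.+1) with
  | Some i => val (w.2 i)
  | None => 0
  end.

(* Y^0_{C_0} Y^1_{C_1} ... Y^M_{C_M} : the prefix X_1 ... X_{2^{M+1}-1} *)
Definition Xpre k M (w : Omega k M) : seq nat :=
  flatten [seq Y w l (Cv w l) | l <- iota 0 M.+1].

(* X^n_j = X_{j 2^n : (j+1) 2^n - 1}  (X_1 is at list index 0) *)
Definition Xblock k M (n j : nat) (w : Omega k M) : seq nat :=
  take (2 ^ n) (drop (j * 2 ^ n).-1 (Xpre w)).

(* G_{<= l} = (L_{ij},R_{ij})_{1<=i<=l, j} *)
Definition Gle k M (l : nat) (w : Omega k M) : seq (seq (nat * nat)) :=
  [seq edges w i | i <- iota 0 l].

Definition prob {Om : finType} {T : eqType} (f : Om -> T) (t : T) : R :=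
  (INR #|[pred w | f w == t]| / INR #|Om|)%R.

Definition entropy {Om : finType} {T : eqType} (f : Om -> T) : R :=
  (- foldr Rplus 0 [seq prob f t * ln (prob f t) | t <- undup [seq f w | w <- enum Om]])%R.

(* Main.v *)
Require Import Defs.
From HB Require Import structures.
From mathcomp Require Import all_boot zify.
From Stdlib Require Import Reals Lra.

Lemma Rplus_0_l' : left_id 0%R Rplus. Proof. move=> x; lra. Qed.
Lemma Rplus_assoc' : associative Rplus. Proof. move=> x y z; lra. Qed.
Lemma Rplus_comm' : commutative Rplus. Proof. move=> x y; lra. Qed.
HB.instance Definition _ := Monoid.isComLaw.Build R 0%R Rplus
  Rplus_assoc' Rplus_comm' Rplus_0_l'.



Lemma iter_Rplus n (c : R) : iter n (Rplus c) 0%R = (INR n * c)%R.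
Proof. elim: n => [|n IH]; first by rewrite /=; lra.
rewrite iterS IH S_INR; lra. Qed.

Lemma rsum_le (I : Type) (r : seq I) (P : pred I) (F G : I -> R) :
  (forall i, P i -> (F i <= G i)%R) ->
  (\big[Rplus/0%R]_(i <- r | P i) F i <= \big[Rplus/0%R]_(i <- r | P i) G i)%R.
Proof.
move=> H; apply: (big_ind2 (fun x y => x <= y)%R) => //; first lra.
move=> *; lra.
Qed.

Lemma rsum_mulr (I : Type) (r : seq I) (P : pred I) (F : I -> R) c :
  (\big[Rplus/0%R]_(i <- r | P i) (F i * c) = (\big[Rplus/0%R]_(i <- r | P i) F i) * c)%R.
Proof.
elim: r => [|x r IH]; first by rewrite !big_nil; lra.
rewrite !big_cons; case: (P x) => //; rewrite IH; lra.
Qed.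

Lemma rsumD (I : Type) (r : seq I) (P : pred I) (F G : I -> R) :
  (\big[Rplus/0%R]_(i <- r | P i) (F i + G i) = \big[Rplus/0%R]_(i <- r | P i) F i + \big[Rplus/0%R]_(i <- r | P i) G i)%R.
Proof. by rewrite big_split. Qed.

Lemma rsum_opp (I : Type) (r : seq I) (P : pred I) (F : I -> R) :
  (\big[Rplus/0%R]_(i <- r | P i) (- F i) = - \big[Rplus/0%R]_(i <- r | P i) F i)%R.
Proof.
elim: r => [|x r IH]; first by rewrite !big_nil; lra.
rewrite !big_cons; case: (P x) => //; rewrite IH; lra.
Qed.

Lemma rsum_partition (Om : finType) (T : eqType) (f : Om -> T) (A : pred Om)
   (r : seq T) (F : Om -> R) : uniq r -> (forall w, A w -> f w \in r) ->
  \big[Rplus/0%R]_(w | A w) F w =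
  \big[Rplus/0%R]_(s <- r) \big[Rplus/0%R]_(w | A w && (f w == s)) F w.
Proof.
move=> ur cov.
rewrite (exchange_big_dep A) /=; last by move=> s w _ /andP[].
apply: eq_bigr => w Aw.
rewrite (big_rem (f w)) ?cov //= eqxx Aw.
rewrite big_seq_cond big1 ?Rplus_0_r // => s /andP[hs /andP[_ /eqP e]].
by rewrite -e mem_rem_uniqF in hs.
Qed.

Lemma foldr_map_big (I : Type) (r : seq I) (F : I -> R) :
  foldr Rplus 0%R [seq F t | t <- r] = \big[Rplus/0%R]_(t <- r) F t.
Proof. elim: r => [|x r IH]; by rewrite ?big_nil ?big_cons //= IH. Qed.

Lemma card_Om_pos (Om : finType) : (0 < #|Om|)%N -> (0 < INR #|Om|)%R.
Proof. move=> h; apply: lt_0_INR; apply/ltP. done. Qed.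

Lemma entropyE (Om : finType) (T : eqType) (f : Om -> T) :
  entropy f = (- (\big[Rplus/0%R]_w ln (prob f (f w))) / INR #|Om|)%R.
Proof.
rewrite /entropy foldr_map_big.
set r := undup _.
rewrite (@rsum_partition _ _ f predT r) ?undup_uniq //; last first.
  by move=> w _; rewrite mem_undup map_f ?mem_enum.
rewrite /Rdiv -Ropp_mult_distr_l -rsum_mulr; congr (- _)%R.
apply: eq_bigr => t _.
rewrite (eq_bigr (fun _ => ln (prob f t))); last by move=> w /eqP ->.
rewrite (eq_bigl (fun w => w \in [pred w | f w == t])) // big_const iter_Rplus.
set p := ln _. rewrite /prob /Rdiv Rmult_assoc (Rmult_comm _ p) -Rmult_assoc. done.
Qed.

Lemma rsum_card (Om : finType) (P : pred Om) c :
  \big[Rplus/0%R]_(w | P w) c = (INR #|[pred w | P w]| * c)%R.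
Proof.
by rewrite (eq_bigl (fun w => w \in [pred w | P w])) // big_const iter_Rplus.
Qed.

Lemma rsum_const (Om : finType) c :
  \big[Rplus/0%R]_(w : Om) c = (INR #|Om| * c)%R.
Proof. by rewrite rsum_card; congr (INR _ * _)%R; apply: eq_card. Qed.

Lemma ln_le' x y : (0 < x)%R -> (x <= y)%R -> (ln x <= ln y)%R.
Proof.
move=> hx [h|->]; last lra.
by apply: Rlt_le; apply: ln_increasing.
Qed.

Lemma ln_le_sub1 x : (0 < x)%R -> (ln x <= x - 1)%R.
Proof. move=> hx; have := exp_ineq1_le (ln x); rewrite exp_ln //; lra. Qed.

Lemma INRgt0 n : (0 < n)%N -> (0 < INR n)%R.
Proof. by move=> h; apply: lt_0_INR; apply/ltP. Qed.

Lemma ln_div' a b : (0 < a)%R -> (0 < b)%R -> ln (a / b) = (ln a - ln b)%R.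
Proof.
move=> ha hb; rewrite /Rdiv ln_mult ?ln_Rinv //; last by apply: Rinv_0_lt_compat.
Qed.

Lemma fiber_bound (Om : finType) (T U : eqType) (f : Om -> T) (g : Om -> U) N
  (w' : Om) (S : seq T) :
  (size S <= N)%N -> (forall w, g w = g w' -> f w \in S) ->
  (\big[Rplus/0%R]_(w | g w == g w')
      / INR #|[pred x | (f x == f w) && (g x == g w)]| <= INR N)%R.
Proof.
move=> hS HS.
rewrite (@rsum_partition _ _ f [pred w | g w == g w'] (undup S)) ?undup_uniq //;
  last by move=> w /eqP /HS; rewrite mem_undup.
apply: (@Rle_trans _ (\big[Rplus/0%R]_(s <- undup S) 1%R)).
  apply: rsum_le => s _.
  rewrite (eq_bigr (fun _ => / INR #|[pred x | (f x == s) && (g x == g w')]|)%R);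
    last by move=> w /andP[/eqP -> /eqP ->].
  rewrite rsum_card.
  have -> : #|[pred w | [pred w | g w == g w'] w && (f w == s)]|
          = #|[pred x | (f x == s) && (g x == g w')]|.
    by apply: eq_card => x; rewrite !inE /= andbC.
  case: (posnP #|[pred x | (f x == s) && (g x == g w')]|) => [->|hp].
    rewrite /= Rmult_0_l; lra.
  rewrite Rinv_r; first lra.
  by apply: Rgt_not_eq; apply: INRgt0.
rewrite big_const_seq count_predT iter_Rplus Rmult_1_r.
apply: le_INR; apply/leP; apply: leq_trans hS; apply: size_undup.
Qed.

Lemma entropy_le (Om : finType) (T U : eqType) (f : Om -> T) (g : Om -> U) (N : nat) :
  (0 < N)%N ->
  (forall w0, exists S : seq T, (size S <= N)%N /\ forall w, g w = g w0 -> f w \in S) ->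
  (entropy f <= entropy g + ln (INR N))%R.
Proof.
move=> N0 HS.
have lnN : (0 <= ln (INR N))%R.
  rewrite -ln_1; apply: ln_le'; first lra.
  by rewrite -[1%R]/(INR 1); apply: le_INR; apply/leP.
rewrite !entropyE.
case: (posnP #|Om|) => [n0|npos].
  have E0 : forall F : Om -> R, \big[Rplus/0%R]_w F w = 0%R.
    by move=> F; rewrite big_pred0 // => w; have := card0_eq n0 w.
  rewrite !E0 Ropp_0 /Rdiv !Rmult_0_l; lra.
set n := INR #|Om|.
have hn : (0 < n)%R by apply: INRgt0.
set cf := fun w => INR #|[pred x | f x == f w]|.
set cg := fun w => INR #|[pred x | g x == g w]|.
set cfg := fun w => INR #|[pred x | (f x == f w) && (g x == g w)]|.
have cpos : forall (P : pred Om) w, P w -> (0 < INR #|[pred x | P x]|)%R.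
  move=> P w Pw; apply: INRgt0; apply/card_gt0P; by exists w.
have cfg_le : forall w, (cfg w <= cf w)%R.
  move=> w; apply: le_INR; apply/leP; apply: subset_leq_card.
  by apply/subsetP => x; rewrite !inE => /andP[].
have SB : (\big[Rplus/0%R]_w (cg w / cfg w) <= INR N * n)%R.

  rewrite (eq_bigr (fun w => \big[Rplus/0%R]_(w' | g w' == g w) Rinv (cfg w))%R);
    last by move=> w _; rewrite rsum_card.
  rewrite (eq_bigr (fun w => \big[Rplus/0%R]_w' (if g w' == g w then Rinv (cfg w) else 0))%R);
    last by move=> w _; rewrite big_mkcond.
  rewrite exchange_big /=.
  rewrite (eq_bigr (fun w' => \big[Rplus/0%R]_(w | g w == g w') Rinv (cfg w))%R); last first.
    by move=> w' _; rewrite [RHS]big_mkcond; apply: eq_bigr => w _; rewrite eq_sym.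
  rewrite Rmult_comm -rsum_const; apply: rsum_le => w' _.
  have [S [hS HS']] := HS w'.
  exact: (@fiber_bound _ _ _ f g N w' S hS HS').
have PB : forall w, (- ln (prob f (f w)) + ln (prob g (g w)) - ln (INR N)
                     <= cg w / cfg w * / INR N - 1)%R.
  move=> w.
  have hf : (0 < cf w)%R by apply: (cpos (fun x => f x == f w) w).
  have hg : (0 < cg w)%R by apply: (cpos (fun x => g x == g w) w).
  have hfg : (0 < cfg w)%R by apply: (cpos (fun x => (f x == f w) && (g x == g w)) w); rewrite !eqxx.
  have hN : (0 < INR N)%R by apply: INRgt0.
  rewrite /prob -/n (ln_div' _ _ hf hn) (ln_div' _ _ hg hn).
  have A := ln_le' _ _ hfg (cfg_le w).
  set x := (cg w / cfg w * / INR N)%R.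
  have hx : (0 < x)%R.
    apply: Rmult_lt_0_compat; last by apply: Rinv_0_lt_compat.
    by apply: Rdiv_lt_0_compat.
  have B := ln_le_sub1 _ hx.
  have E : ln x = (ln (cg w) - ln (cfg w) - ln (INR N))%R.
    rewrite /x ln_mult ?ln_Rinv ?ln_div' //; try by apply: Rinv_0_lt_compat.
    by apply: Rdiv_lt_0_compat.
  rewrite /cf /cg in A E B *; lra.
have S1 := @rsum_le _ (index_enum Om) (fun _ => true) _ _ (fun w _ => PB w).
have hN : (0 < INR N)%R by apply: INRgt0.
move: S1; rewrite /Rminus !rsumD !rsum_opp !rsum_const rsum_mulr -/n => S1.
have S3 : (\big[Rplus/0%R]_w (cg w / cfg w) * / INR N <= n)%R.
  apply: (@Rle_trans _ (INR N * n * / INR N)%R).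
    apply: Rmult_le_compat_r => //; left; by apply: Rinv_0_lt_compat.
  right; field; lra.
set A := \big[Rplus/0%R]_w ln (prob f (f w)).
set B := \big[Rplus/0%R]_w ln (prob g (g w)).
rewrite -/A -/B in S1.
have e : ln (INR N) = (n * ln (INR N) * / n)%R by field; lra.
rewrite [X in (_ <= _ + X)%R]e /Rdiv -Rmult_plus_distr_r.
apply: Rmult_le_compat_r; first by left; apply: Rinv_0_lt_compat.
lra.
Qed.



Section Comb.
Variables (k : nat -> nat) (M : nat) (hpos : forall n, (0 < k n)%N).

Lemma edges_bound (w : Omega k M) m i :
  ((nth (0,0) (edges w m) i).1 < k m)%N && ((nth (0,0) (edges w m) i).2 < k m)%N.
Proof.
rewrite /edges; case: insubP => [i0 _ <-|_]; last by rewrite nth_nil /= hpos.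
set L := sort _ _.
case: (ltnP i (size L)) => hi; last by rewrite nth_default //= hpos.
have : nth (0,0) L i \in L by apply: mem_nth.
by rewrite mem_sort => /mapP [p _ ->] /=; rewrite !ltn_ord.
Qed.

Lemma Cv_bound (w : Omega k M) m : (Cv w m < k m)%N.
Proof.
rewrite /Cv; case: insubP => [i0 _ <-|_] //; exact: ltn_ord.
Qed.

Lemma size_Y (w : Omega k M) m i : size (Y w m i) = expn 2 m.
Proof.
elim: m i => [|m IH] i //; by rewrite [LHS]/= size_cat !IH expnS mul2n addnn.
Qed.

Lemma Y_Gle (w w' : Omega k M) l : Gle l w = Gle l w' ->
  forall m i, (m <= l)%N -> Y w m i = Y w' m i.
Proof.
move=> hG; elim=> [|m IH] i hm //=.
have he : edges w m = edges w' m.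
  have := congr1 (fun s => nth [::] s m) hG.
  by rewrite /Gle !(nth_map 0) ?size_iota ?nth_iota.
by rewrite he !IH // ltnW.
Qed.

Lemma Y_decomp (w : Omega k M) l d c : (c < k (l + d))%N ->
  exists s, [/\ size s = expn 2 d, all (fun x => x < k l)%N s &
     Y w (l + d) c = flatten (map (Y w l) s)].
Proof.
elim: d c => [|d IH] c hc.
  by exists [:: c]; rewrite addn0 in hc *; rewrite /= hc cats0.
have /andP [h1 h2] := edges_bound w (l + d) c.
have [s1 [e1 a1 y1]] := IH _ h1.
have [s2 [e2 a2 y2]] := IH _ h2.
exists (s1 ++ s2); split.
- by rewrite size_cat e1 e2 expnS mul2n addnn.
- by rewrite all_cat a1 a2.
- by rewrite addnS /= y1 y2 map_cat flatten_cat.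
Qed.


Lemma powE a b : Nat.pow a b = expn a b.
Proof. elim: b => [|b IH] //=; by rewrite IH expnS. Qed.

Lemma take_flatten_const (T : Type) p a (ss : seq (seq T)) :
  all (fun s => size s == p) ss -> take (a * p) (flatten ss) = flatten (take a ss).
Proof.
elim: ss a => [|s ss IH] a; first by case: a.
case: a => [|a] /= /andP [/eqP hs hall]; first by rewrite mul0n take0.
rewrite take_cat hs mulSn ltnNge leq_addr /= addKn IH //.
Qed.

Lemma drop_flatten_const (T : Type) p b (ss : seq (seq T)) :
  all (fun s => size s == p) ss -> drop (b * p) (flatten ss) = flatten (drop b ss).
Proof.
elim: ss b => [|s ss IH] b; first by case: b.
case: b => [|b] /= /andP [/eqP hs hall]; first by rewrite mul0n drop0.
rewrite drop_cat hs mulSn ltnNge leq_addr /= addKn IH //.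
Qed.

Lemma size_prefix (w : Omega k M) l :
  size (flatten [seq Y w m (Cv w m) | m <- iota 0 l]) = (expn 2 l).-1.
Proof.
elim: l => [|l IH] //.
rewrite -addn1 iotaD map_cat flatten_cat size_cat IH /= cats0 size_Y add0n.
rewrite expnD expn1.
have := expn_gt0 2 l; set x := expn 2 l => hx; lia.
Qed.

Lemma suffix_decomp (w : Omega k M) l K : exists S,
  [/\ size S = (expn 2 K).-1, all (fun x => x < k l)%N S &
   flatten [seq Y w m (Cv w m) | m <- iota l K] = flatten (map (Y w l) S)].
Proof.
elim: K => [|K [S [e a f]]]; first by exists [::].
have [s [es sa ys]] := @Y_decomp w l K _ (Cv_bound w (l + K)).
exists (S ++ s); split.
- rewrite size_cat e es expnS.
  have := expn_gt0 2 K; set x := expn 2 K => hx; lia.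
- by rewrite all_cat a sa.
- by rewrite -addn1 iotaD map_cat flatten_cat f /= cats0 ys map_cat flatten_cat.
Qed.


Lemma Xblock_decomp (w : Omega k M) n j l : (0 < j)%N -> (l <= n)%N ->
  (j.+1 * expn 2 n <= expn 2 M.+1)%N ->
  exists s, [/\ size s = expn 2 (n - l), all (fun x => x < k l)%N s &
     Xblock n j w = flatten (map (Y w l) s)].
Proof.
move=> hj hl hM.
have hnM : (n < M.+1)%N.
  rewrite -(@leq_exp2l 2) //; apply: leq_trans hM.
  by rewrite expnS leq_mul2r ltnS hj orbT.
have hlM : (l <= M.+1)%N by apply: leq_trans (ltnW hnM).
rewrite /Xblock /Xpre !powE.
rewrite -(subnKC hlM) iotaD map_cat flatten_cat add0n.
have [S [eS aS fS]] := suffix_decomp w l (M.+1 - l).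
rewrite fS.
set x := expn 2 l; set y := expn 2 (n - l); set z := expn 2 (M.+1 - l).
have hx : (0 < x)%N by apply: expn_gt0.
have hy : (0 < y)%N by apply: expn_gt0.
have e2n : expn 2 n = y * x by rewrite /x /y -expnD subnK.
have e2M : expn 2 M.+1 = z * x by rewrite /x /z -expnD subnK.
rewrite e2n e2M mulnA leq_mul2r eqn0Ngt hx /= in hM.
have jy : (0 < j * y)%N by rewrite muln_gt0 hj.
have ed : (j * (y * x)).-1 = x.-1 + (j * y).-1 * x.
  rewrite mulnA -!subn1 mulnBl mul1n.
  have : (x <= j * y * x)%N by rewrite leq_pmull.
  lia.
rewrite e2n ed addnC -drop_drop drop_size_cat ?size_prefix //.
have hall : all (fun s => size s == x) [seq Y w l i | i <- S].
  by apply/allP => s /mapP [i _ ->]; rewrite size_Y.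

rewrite drop_flatten_const // take_flatten_const; last first.
  by apply/allP => s /mem_drop hs; move/allP: hall => /(_ s hs).
exists (take y (drop (j * y).-1 S)); split.
- rewrite size_takel // size_drop eS.
  move: hM; rewrite mulSn; lia.
- apply/allP => i /mem_take /mem_drop hi; by move/allP: aS => /(_ i hi).
- by rewrite map_take map_drop.
Qed.

End Comb.

Theorem proposition8 (k : nat -> nat)
  (hpos : forall n, (0 < k n)%N)
  (hk : forall n, (0 < n)%N -> (k n.-1 <= k n)%N && (k n <= k n.-1 ^ 2)%N)
  (n j M : nat) (hj : (0 < j)%N) (hM : (j.+1 * 2 ^ n <= 2 ^ M.+1)%N)
  (l : nat) (hl : (l <= n)%N) :
  (entropy (@Xblock k M n j)
     <= entropy (@Gle k M l) + pow 2 (n - l) * ln (INR (k l)))%R.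
Proof.
rewrite !powE in hM.
set y := expn 2 (n - l).
set N := expn (k l) y.
have N0 : (0 < N)%N by rewrite expn_gt0 hpos.
have H : forall w0 : Omega k M, exists S : seq (seq nat), (size S <= N)%N /\
    forall w : Omega k M, Gle l w = Gle l w0 -> Xblock n j w \in S.
  move=> w0.
  exists [seq flatten (map (Y w0 l) (map val (tval t))) | t <- enum {: y.-tuple 'I_(k l)}].
  split.
    by rewrite size_map -cardE card_tuple card_ord.
  move=> w hG.
  have [s [es as_ ex]] := @Xblock_decomp k M hpos w n j l hj hl hM.
  have ss : size (map (fun x => Ordinal (ltn_pmod x (hpos l))) s) == y.
    by rewrite size_map es.
  apply/mapP; exists (Tuple ss); first by rewrite mem_enum.
  rewrite ex /= -!map_comp; congr flatten; apply/eq_in_map => x hx /=.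
  rewrite modn_small; last by move/allP: as_ => /(_ x hx).
  exact: (@Y_Gle k M w w0 l hG l x (leqnn l)).
apply: (Rle_trans _ _ _ (@entropy_le _ _ _ (@Xblock k M n j) (@Gle k M l) N N0 H)).
apply: Rplus_le_compat_l; right.
have hkl : (0 < INR (k l))%R by apply: INRgt0.
rewrite /N -powE pow_INR ln_pow // /y -powE pow_INR.
have -> : INR 2 = 2%R by simpl; lra.
done.
Qed.
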